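(* Let $X_\Sigma$ be a projective toric variety. For any $x\in Z(\Sigma)$ and any $D\in\mathrm{Amp}(X_\Sigma)_{\mathbf R}$, there is a unique vector $\lambda^D_x\in\Lambda^D_x$ that is $\chi_D$-adapted to $x$, and $M^D(x)=-\|\lambda^D_x\|$.
   Context: $\Sigma$ complete fan, rays $\Sigma(1)$, generators $u_\rho$, divisors $D_\rho$; primitive collections $C\subset\Sigma(1)$ (not contained in $\sigma(1)$ for any cone $\sigma$, every proper subset is); $Z(\Sigma)=\bigcup_CV(x_\rho:\rho\in C)\subset\mathbf C^{\Sigma(1)}$. $G=\mathrm{Hom}(\mathrm{Cl}(X_\Sigma),\mathbf C^\times)$, $\Gamma(G)=\{b\in\mathbf Z^{\Sigma(1)}:\sum b_\rho u_\rho=0\}$, $\langle\chi_D,b\rangle=\sum a_\rho b_\rho$ for $D=\sum a_\rho D_\rho$, extended $\mathbf R$-linearly; $\Gamma(G)_{\mathbf R}\subset\mathbf R^{\Sigma(1)}$ with restricted standard inner product and norm; $\chi_D^*\in\Gamma(G)_{\mathbf R}$ defined by $(\chi_D^*,v)=\langle\chi_D,v\rangle$. $\mathrm{Amp}(X_\Sigma)_{\mathbf R}$ is the ample cone in $\mathrm{Pic}(X_\Sigma)_{\mathbf R}$. For $x\in\mathbf C^{\Sigma(1)}$, $S_x=\{\rho:x_\rho\ne0\}$, $\sigma_x=\{v\in\Gamma(G)_{\mathbf R}:v_\rho\ge0\ \forall\rho\in S_x\}$; for $Z\subset\Sigma(1)$, $W_Z=\{v\in\Gamma(G)_{\mathbf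 R}:v_\rho=0\ \forall\rho\in Z\}$ and $\mathrm{Proj}_{W_Z}$ is orthogonal projection; $\Lambda^D_x=\{-\mathrm{Proj}_{W_Z}\chi_D^*:Z\subset S_x,\ -\mathrm{Proj}_{W_Z}\chi_D^*\in\sigma_x\}$. $M^D(x)=\inf_{\lambda\in\sigma_x\setminus\{0\}}\langle\chi_D,\lambda\rangle/\|\lambda\|$, and $\lambda\in\Gamma(G)_{\mathbf R}$ is $\chi_D$-adapted to $x$ if $\langle\chi_D,\lambda\rangle/\|\lambda\|=M^D(x)$. *)

(* Defs.v *)
From HB Require Import structures.
From mathcomp Require Import all_boot all_order all_algebra.
From mathcomp Require Import classical_sets boolp reals constructive_ereal ereal.
From mathcomp Require Import complex.
From Stdlib Require Import ClassicalEpsilon.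

Set Implicit Arguments.
Unset Strict Implicit.
Unset Printing Implicit Defensive.

Import Order.TTheory GRing.Theory Num.Theory.
Local Open Scope ring_scope.
Local Open Scope classical_set_scope.

Section Toric.
Variables (R : realType) (n r : nat).

(* rays are indexed by 'I_r; u i : Z^n is the generator of ray i *)
Definition vecR := 'I_r -> R.
Definition dotR (v w : vecR) : R := \sum_(i < r) v i * w i.
Definition normR (v : vecR) : R := Num.sqrt (dotR v v).

Definition pairN (m v : 'I_n -> R) : R := \sum_(j < n) m j * v j.

Variable u : 'I_r -> 'I_n -> int.
Definition uR (i : 'I_r) : 'I_n -> R := fun j => (u i j)%:~R.

Definition cone_of (tau : {set 'I_r}) : set ('I_n -> R) :=
  [set v | exists c : 'I_r -> R, (forall i, 0 <= c i) /\
      (forall i, i \notin tau -> c i = 0) /\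
      v = (fun j => \sum_(i < r) c i * uR i j)].

Definition is_face (C F : set ('I_n -> R)) : Prop :=
  exists m : 'I_n -> R, (forall v, C v -> 0 <= pairN m v) /\
    F = C `&` [set v | pairN m v = 0].

(* S : the cones of the fan, each given by its set of rays sigma(1) *)
Definition is_complete_fan (S : {set {set 'I_r}}) : Prop :=
  (forall i (d : nat), (forall j, (d %| `|u i j|)%N) -> d = 1%N) /\
  (forall i, [set i]%SET \in S) /\
  (forall tau, tau \in S -> forall i, cone_of tau (uR i) <-> i \in tau) /\
  (forall tau, tau \in S -> forall v,
      cone_of tau v -> cone_of tau (fun j => - v j) -> v = (fun _ => 0)) /\
  (forall tau, tau \in S -> forall F, is_face (cone_of tau) F ->
      exists2 tau', tau' \in S & F = cone_of tau') /\
  (forall tau1 tau2, tau1 \in S -> tau2 \in S ->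
      is_face (cone_of tau1) (cone_of tau1 `&` cone_of tau2) /\
      is_face (cone_of tau2) (cone_of tau1 `&` cone_of tau2)) /\
  (forall v : 'I_n -> R, exists2 tau, tau \in S & cone_of tau v).

Definition maximal_cone (S : {set {set 'I_r}}) (sigma : {set 'I_r}) : Prop :=
  sigma \in S /\ forall tau, tau \in S -> (sigma \subset tau)%SET -> tau = sigma.

(* D = sum_i a_i D_i is an R-Cartier divisor with strictly convex support
   function, i.e. its class lies in Amp(X_Sigma)_R *)
Definition ample (S : {set {set 'I_r}}) (a : vecR) : Prop :=
  forall sigma, maximal_cone S sigma ->
    exists m : 'I_n -> R,
      (forall i, i \in sigma -> pairN m (uR i) = - a i) /\
      (forall i, i \notin sigma -> pairN m (uR i) > - a i).

Definition projective (S : {set {set 'I_r}}) : Prop := exists a, ample S a.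

Definition primitive_collection (S : {set {set 'I_r}}) (C : {set 'I_r}) : Prop :=
  (forall tau, tau \in S -> ~~ (C \subset tau)%SET) /\
  (forall C' : {set 'I_r}, (C' \proper C)%SET -> exists2 tau, tau \in S & (C' \subset tau)%SET).

Definition Zfan (S : {set {set 'I_r}}) : set ('I_r -> R[i]) :=
  [set x | exists C, primitive_collection S C /\ forall i, i \in C -> x i = 0].

Definition GammaR : set vecR :=
  [set v | forall j, \sum_(i < r) v i * uR i j = 0].

Definition pairD (a v : vecR) : R := dotR a v.

Definition vzero : vecR := fun _ => 0.

(* chi_D^* : the element of Gamma(G)_R representing <chi_D, .> *)
Definition chistar (a : vecR) : vecR :=
  epsilon (inhabits vzero)
    (fun w => GammaR w /\ forall v, GammaR v -> dotR w v = pairD a v).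

Definition S_x (x : 'I_r -> R[i]) : {set 'I_r} := [set i | x i != 0].

Definition sigma_x (x : 'I_r -> R[i]) : set vecR :=
  [set v | GammaR v /\ forall i, i \in S_x x -> 0 <= v i].

Definition W_ (Z : {set 'I_r}) : set vecR :=
  [set v | GammaR v /\ forall i, i \in Z -> v i = 0].

Definition proj (W : set vecR) (v : vecR) : vecR :=
  epsilon (inhabits vzero)
    (fun p => W p /\ forall y, W y -> dotR (fun i => v i - p i) y = 0).

Definition Lambda (a : vecR) (x : 'I_r -> R[i]) : set vecR :=
  [set lam | exists Z : {set 'I_r}, (Z \subset S_x x)%SET /\
     lam = (fun i => - proj (W_ Z) (chistar a) i) /\ sigma_x x lam].

Definition MD (a : vecR) (x : 'I_r -> R[i]) : \bar R :=
  ereal_inf [set ((pairD a lam / normR lam)%:E) | lam in sigma_x x `\ vzero].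

Definition adapted (a : vecR) (x : 'I_r -> R[i]) (lam : vecR) : Prop :=
  ((pairD a lam / normR lam)%:E = MD a x)%E.

End Toric.

(* Main.v *)
Require Import Defs.
From HB Require Import structures.
From mathcomp Require Import all_boot all_order all_algebra.
From mathcomp Require Import classical_sets boolp reals constructive_ereal ereal.
From mathcomp Require Import complex.
From mathcomp Require Import ring lra.
From Stdlib Require Import ClassicalEpsilon.
Import Order.TTheory GRing.Theory Num.Theory.
Local Open Scope ring_scope.
Local Open Scope classical_set_scope.

Set Implicit Arguments.
Unset Strict Implicit.

Section LA.
Variables (R : realType) (r : nat).
Local Notation V := (vecR R r).

Lemma dotRC (v w : V) : dotR v w = dotR w v.
Proof. by rewrite /dotR; apply: eq_bigr => i _; rewrite mulrC. Qed.

Lemma dotR_lin (e v w : V) (s t : R) :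
  dotR e (fun i => s * v i + t * w i) = s * dotR e v + t * dotR e w.
Proof.
rewrite /dotR !mulr_sumr -big_split /=; apply: eq_bigr => i _; ring.
Qed.

Lemma dotR_linl (e v w : V) (s t : R) :
  dotR (fun i => s * v i + t * w i) e = s * dotR v e + t * dotR w e.
Proof. by rewrite dotRC dotR_lin (dotRC e) (dotRC e). Qed.

Lemma dotR_sub (e v w : V) :
  dotR e (fun i => v i - w i) = dotR e v - dotR e w.
Proof.
have -> : (fun i => v i - w i) = (fun i => 1 * v i + (-1) * w i).
  by apply: funext => i; ring.
by rewrite dotR_lin; ring.
Qed.

Lemma dotR_subl (e v w : V) :
  dotR (fun i => v i - w i) e = dotR v e - dotR w e.
Proof. by rewrite dotRC dotR_sub (dotRC e) (dotRC e). Qed.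

Lemma dotR_ge0 (v : V) : 0 <= dotR v v.
Proof. by apply: sumr_ge0 => i _; rewrite -expr2 sqr_ge0. Qed.

Lemma dotR_eq0 (v : V) : dotR v v = 0 -> v = (fun _ => 0).
Proof.
move=> h; apply: funext => i.
have hi : v i * v i = 0.
  apply: (psumr_eq0P (P := xpredT) (F := fun i => v i * v i)) => //.
  by move=> j _; rewrite -expr2 sqr_ge0.
by apply/eqP; move/eqP: hi; rewrite mulf_eq0 orbb.
Qed.

Fixpoint inH (E : seq V) (v : V) : Prop :=
  if E is e :: E' then dotR e v = 0 /\ inH E' v else True.
Fixpoint inG (G : seq V) (v : V) : Prop :=
  if G is g :: G' then 0 <= dotR g v /\ inG G' v else True.

Lemma inH_lin E v w s t : inH E v -> inH E w -> inH E (fun i => s * v i + t * w i).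
Proof.
elim: E => [//|e E IH] /= [h1 h2] [h3 h4]; split; last exact: IH.
by rewrite dotR_lin h1 h3; ring.
Qed.

Lemma inH_sub E v w : inH E v -> inH E w -> inH E (fun i => v i - w i).
Proof.
move=> hv hw; have := inH_lin 1 (-1) hv hw.
have -> // : (fun i => 1 * v i + (-1) * w i) = (fun i => v i - w i).
by apply: funext => i; ring.
Qed.

Lemma inH_opp E v : inH E v -> inH E (fun i => - v i).
Proof.
move=> hv; have := inH_lin (-1) 0 hv hv.
have -> // : (fun i => (-1) * v i + 0 * v i) = (fun i => - v i).
by apply: funext => i; ring.
Qed.

Lemma inG_conv G v w s t : 0 <= s -> 0 <= t ->
  inG G v -> inG G w -> inG G (fun i => s * v i + t * w i).
Proof.
move=> hs ht; elim: G => [//|g G IH] /= [h1 h2] [h3 h4]; split; last exact: IH.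
rewrite dotR_lin; apply: addr_ge0; exact: mulr_ge0.
Qed.

Lemma inH_cat E1 E2 v : inH (E1 ++ E2) v <-> inH E1 v /\ inH E2 v.
Proof.
elim: E1 => [|e E1 IH] /=; first by split => // [[]].
by rewrite IH; split => [[a [b c]]|[[a b] c]].
Qed.

Definition isproj (W : set V) (c p : V) : Prop :=
  W p /\ forall y, W y -> dotR (fun i => c i - p i) y = 0.

Lemma isproj_ext (W W' : set V) c p : (forall v, W v <-> W' v) ->
  isproj W c p -> isproj W' c p.
Proof. by move=> e [h1 h2]; split; [apply/e | move=> y /e; apply: h2]. Qed.

Lemma proj_exists E : forall c, exists p, isproj (inH E) c p.
Proof.
elim: E => [|e E IH] c.
  by exists c; split => // y _; rewrite /dotR big1 // => i _; rewrite subrr mul0r.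
have [pc [pc1 pc2]] := IH c.
have [h [h1 h2]] := IH e.
have key : forall v, inH E v -> dotR e v = dotR h v.
  by move=> v hv; have := h2 v hv; rewrite dotR_subl => /eqP; rewrite subr_eq0 => /eqP.
pose k := dotR h pc / dotR h h.
exists (fun i => 1 * pc i + (- k) * h i); split.
  split; last exact: inH_lin.
  rewrite key; last exact: inH_lin.
  rewrite dotR_lin.
  have [hz|hnz] := eqVneq (dotR h h) 0.
    have := dotR_eq0 hz => ->.
    by rewrite /dotR !big1 ?mulr0 ?addr0 // => i _; rewrite mul0r.
  by rewrite /k; field.
move=> y [ey hy].
have -> : (fun i => c i - (1 * pc i + - k * h i)) = (fun i => 1 * (c i - pc i) + k * h i).
  by apply: funext => i; ring.
rewrite dotR_linl pc2 // -key // ey; ring.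
Qed.

Definition fd (c v : V) := dotR (fun i => v i - c i) (fun i => v i - c i).

Lemma fd_proj E c p v : isproj (inH E) c p -> inH E v ->
  fd c v = fd c p + dotR (fun i => v i - p i) (fun i => v i - p i).
Proof.
move=> [hp ho] hv.
have h0 := ho _ (inH_sub hv hp).
apply/eqP; rewrite -subr_eq0; apply/eqP.
rewrite -[RHS](mulr0 (-2)) -h0.
rewrite /fd /dotR mulr_sumr -big_split /= -sumrB; apply: eq_bigr => i _; ring.
Qed.

Lemma fd_conv c v w t : 0 <= t <= 1 ->
  fd c (fun i => t * v i + (1 - t) * w i) <= t * fd c v + (1 - t) * fd c w.
Proof.
case/andP=> t0 t1.
rewrite /fd /dotR !mulr_sumr -big_split /=; apply: ler_sum => i _.
have : 0 <= t * (1 - t) * (v i - w i) ^+ 2.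
  by apply: mulr_ge0; [apply: mulr_ge0; lra | exact: sqr_ge0].
rewrite -subr_ge0; set X := (X in 0 <= X -> _); set Y := (Y in _ -> 0 <= Y).
suff -> : Y = X by [].
rewrite /X /Y; ring.
Qed.

Lemma min_exists c (G : seq V) : forall E, exists q (m : bitseq),
  isproj (inH (mask m G ++ E)) c q /\ inH E q /\ inG G q /\
  (forall v, inH E v -> inG G v -> fd c q <= fd c v).
Proof.
elim: G => [|g G IH] E.
  have [p hp] := proj_exists E c.
  exists p, [::]; split => //; split; first by case: hp.
  split => // v hv _; rewrite (fd_proj hp hv) lerDl; exact: dotR_ge0.
have [q [m [hq1 [hq2 [hq3 hq4]]]]] := IH E.
have [hgq|hgq] := leP 0 (dotR g q).
  exists q, (false :: m); split => //; split => //; split => //.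
  by move=> v hv [_ hv']; apply: hq4.
have [q' [m' [hq1' [[hgq' hq2'] [hq3' hq4']]]]] := IH (g :: E).
exists q', (true :: m'); split.
  apply: isproj_ext hq1' => v /=; rewrite !inH_cat /=.
  by split => [[a [b c']]|[a [b c']]].
split => //; split; first by split => //; rewrite hgq'.
move=> v hv [hgv hGv].
have [hgv0|hgv0] := eqVneq (dotR g v) 0.
  by apply: hq4' => //; split.
have hgvp : 0 < dotR g v by rewrite lt_def hgv0 hgv.
pose t := - dotR g q / (dotR g v - dotR g q).
have hden : 0 < dotR g v - dotR g q by lra.
have t0 : 0 <= t by rewrite /t divr_ge0 //; lra.
have t1 : t <= 1 by rewrite /t ler_pdivrMr //; lra.
pose w := fun i => t * v i + (1 - t) * q i.
have hw : inH (g :: E) w.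
  split; last exact: inH_lin.
  rewrite /w dotR_lin /t; field; lra.
have hGw : inG G w by apply: inG_conv => //; lra.
apply: le_trans (hq4' _ hw hGw) _.
apply: le_trans (fd_conv c v q (t:=t) _) _; first by rewrite t0 t1.
have := hq4 v hv hGv.
nra.
Qed.

Lemma isproj_uniq E c p1 p2 : isproj (inH E) c p1 -> isproj (inH E) c p2 -> p1 = p2.
Proof.
move=> [h1 o1] [h2 o2].
have hd := inH_sub h1 h2.
have e1 := o1 _ hd; have e2 := o2 _ hd.
have : dotR (fun i => p1 i - p2 i) (fun i => p1 i - p2 i) = 0.
  have hf : (fun i => p1 i - p2 i) = (fun i => 1 * (c i - p2 i) + (-1) * (c i - p1 i)).
    by apply: funext => i; ring.
  rewrite {1}hf dotR_linl e2 e1; ring.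
move/dotR_eq0 => h; apply: funext => i.
by have := congr1 (fun f => f i) h => /= /eqP; rewrite subr_eq0 => /eqP.
Qed.

End LA.

Lemma exists_max r (S : {set {set 'I_r}}) tau : tau \in S ->
  exists sigma, maximal_cone S sigma /\ (tau \subset sigma)%SET.
Proof.
move=> ht.
pose P := [pred s : {set 'I_r} | (s \in S) && (tau \subset s)%SET].
have Pt : P tau by rewrite /= ht subxx.
case: (arg_maxnP (fun s : {set 'I_r} => #|s|) Pt) => s /andP[sS ts] hmax.
exists s; split => //; split => // t tS st.
apply/eqP; rewrite eq_sym eqEcard st /=; apply: hmax.
by rewrite /= tS (fintype.subset_trans ts st).
Qed.

Lemma unstable (R : realType) n r (u : 'I_r -> 'I_n -> int) S
  (hfan : is_complete_fan R u S) (x : 'I_r -> R[i]) (hx : Zfan S x) a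
  (ha : ample u S a) :
  exists l0, GammaR u l0 /\ sigma_x u x l0 /\ pairD a l0 < 0.
Proof.
case: hfan => _ [_ [_ [_ [_ [_ hcomp]]]]].
case: hx => C [[hC _] hCx].
pose T := [set i | x i == 0]%SET.
pose v := fun j => \sum_(i in T) uR R u i j.
have [tau htau [cc [hc0 [hcout hv]]]] := hcomp v.
have [sigma [hmax hts]] := exists_max htau.
have [mm [hin hout]] := ha sigma hmax.
have mk : forall F : 'I_r -> R, \sum_(i in T) F i = \sum_i (i \in T)%:R * F i.
  move=> F; rewrite big_mkcond; apply: eq_bigr => i _.
  by case: (i \in T); rewrite ?mul1r ?mul0r.
exists (fun i => cc i - (i \in T)%:R); split; [|split].
- move=> j; under eq_bigr do rewrite mulrBl; rewrite sumrB -mk.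
  have := congr1 (fun f => f j) hv; rewrite /v /= => <-; by rewrite subrr.
- split.
    move=> j; under eq_bigr do rewrite mulrBl; rewrite sumrB -mk.
    have := congr1 (fun f => f j) hv; rewrite /v /= => <-; by rewrite subrr.
  move=> i; rewrite /S_x inE => hi.
  have -> : (i \in T) = false by rewrite inE; exact: negbTE.
  by rewrite subr0.
have e0 : forall i, a i * cc i = - (cc i * pairN mm (uR R u i)).
  move=> i; have [hi|hi] := boolP (i \in tau).
    by rewrite hin; [ring | exact: (fintype.subsetP hts i hi)].
  by rewrite hcout //; ring.
have e1 : \sum_i cc i * pairN mm (uR R u i) = pairN mm v.
  rewrite hv /pairN; under eq_bigr do rewrite mulr_sumr.
  rewrite exchange_big; apply: eq_bigr => j _; rewrite mulr_sumr.
  by apply: eq_bigr => i _; rewrite /uR; ring.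
have e2 : pairN mm v = \sum_(i in T) pairN mm (uR R u i).
  rewrite /v /pairN; under eq_bigr do rewrite mulr_sumr.
  by rewrite exchange_big.
have -> : pairD a (fun i => cc i - (i \in T)%:R) =
          \sum_(i in T) (- pairN mm (uR R u i) - a i).
  rewrite /pairD /dotR; under eq_bigr do rewrite mulrBr.
  rewrite sumrB; under eq_bigr do rewrite e0.
  rewrite sumrN e1 e2 sumrB sumrN mk; congr (_ - _).
  by rewrite mk; apply: eq_bigr => i _; rewrite mulrC.
have [i0 i0C i0s] := subsetPn (hC sigma (proj1 hmax)).
have i0T : i0 \in T by rewrite inE hCx.
rewrite (bigD1 i0) //=.
have h0 : - pairN mm (uR R u i0) - a i0 < 0.
  by have := hout i0 i0s; lra.
have h1 : \sum_(i in T | i != i0) (- pairN mm (uR R u i) - a i) <= 0.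
  apply: sumr_le0 => i _.
  have [hi|hi] := boolP (i \in sigma).
    by rewrite hin //; lra.
  by have := hout i hi; lra.
lra.
Qed.

Section Aux.
Variables (R : realType) (r : nat).
Local Notation V := (vecR R r).

Definition delta (i : 'I_r) : V := fun k => (i == k)%:R.

Lemma dotR_delta i (v : V) : dotR (delta i) v = v i.
Proof.
rewrite /dotR (bigD1 i) //= /delta eqxx mul1r big1 ?addr0 // => k hk.
by rewrite eq_sym (negbTE hk) mul0r.
Qed.

Lemma inH_map (T : eqType) (F : T -> V) s v :
  inH [seq F j | j <- s] v <-> forall j, j \in s -> dotR (F j) v = 0.
Proof.
elim: s => [|j s IH] /=; first by split.
rewrite IH; split => [[h1 h2] k|h]; first by rewrite inE => /orP[/eqP->|/h2].
by split => [|k hk]; apply: h; rewrite inE ?eqxx ?hk ?orbT.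
Qed.

Lemma inG_map (T : eqType) (F : T -> V) s v :
  inG [seq F j | j <- s] v <-> forall j, j \in s -> 0 <= dotR (F j) v.
Proof.
elim: s => [|j s IH] /=; first by split.
rewrite IH; split => [[h1 h2] k|h]; first by rewrite inE => /orP[/eqP->|/h2].
by split => [|k hk]; apply: h; rewrite inE ?eqxx ?hk ?orbT.
Qed.

Lemma dotR_scale (e v : V) t : dotR e (fun i => t * v i) = t * dotR e v.
Proof. by rewrite /dotR mulr_sumr; apply: eq_bigr => i _; ring. Qed.

Lemma dotR_scale2 (v : V) t :
  dotR (fun i => t * v i) (fun i => t * v i) = t ^+ 2 * dotR v v.
Proof. by rewrite /dotR mulr_sumr; apply: eq_bigr => i _; ring. Qed.

Lemma dotR_oppl (v w : V) : dotR (fun i => - v i) w = - dotR v w.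
Proof. by rewrite /dotR -sumrN; apply: eq_bigr => i _; ring. Qed.

Lemma fd_opp (c v : V) :
  fd (fun i => - c i) v = dotR c c + 2 * dotR c v + dotR v v.
Proof.
rewrite /fd /dotR mulr_sumr -!big_split /=; apply: eq_bigr => i _; ring.
Qed.

Lemma fd_mid (c v w : V) :
  fd c (fun i => 2^-1 * v i + (1 - 2^-1) * w i) =
  2^-1 * fd c v + 2^-1 * fd c w
  - 4^-1 * dotR (fun i => v i - w i) (fun i => v i - w i).
Proof.
rewrite /fd /dotR !mulr_sumr -!big_split /= -sumrB; apply: eq_bigr => i _.
by field.
Qed.

Lemma inG_scale G (v : V) t : 0 <= t -> inG G v -> inG G (fun i => t * v i).
Proof.
move=> ht hv; have := inG_conv (s:=t) (t:=0) ht (lexx 0) hv hv.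
by have -> : (fun i => t * v i + 0 * v i) = (fun i => t * v i)
  by apply: funext => i; ring.
Qed.

Lemma inH_scale E (v : V) t : inH E v -> inH E (fun i => t * v i).
Proof.
move=> hv; have := inH_lin t 0 hv hv.
by have -> : (fun i => t * v i + 0 * v i) = (fun i => t * v i)
  by apply: funext => i; ring.
Qed.

End Aux.

Lemma real_pos (R : realType) (m2 A B : R) : 0 <= B -> A < 0 ->
  (forall t, 0 <= t -> - m2 <= 2 * t * A + t ^+ 2 * B) -> 0 < m2.
Proof.
move=> hB hA h.
have [B0|Bp] := eqVneq B 0.
  by have := h 1 ler01; rewrite B0 expr1n mulr0 mulr1 addr0 => H; lra.
have Bp' : 0 < B by rewrite lt_def Bp hB.
have hA' : 0 <= - A by lra.
have := h (- A / B) (divr_ge0 hA' hB).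
have -> : 2 * (- A / B) * A + (- A / B) ^+ 2 * B = - (A ^+ 2 / B) by field.
have : 0 < A ^+ 2 / B by rewrite divr_gt0 // exprn_even_gt0 //= lt_eqF.
move=> H1 H2; lra.
Qed.

Lemma real_ratio (R : realType) (m2 A B : R) : 0 < m2 -> 0 < B ->
  (forall t, 0 <= t -> - m2 <= 2 * t * A + t ^+ 2 * B) ->
  - Num.sqrt m2 <= A / Num.sqrt B.
Proof.
move=> hm hB h.
set sm := Num.sqrt m2; set sb := Num.sqrt B.
have smp : 0 < sm by rewrite sqrtr_gt0.
have sbp : 0 < sb by rewrite sqrtr_gt0.
have em : m2 = sm ^+ 2 by rewrite sqr_sqrtr // ltW.
have eB : B = sb ^+ 2 by rewrite sqr_sqrtr // ltW.
set X := A / sb.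
have eA : A = X * sb by rewrite /X mulfVK // gt_eqF.
have := h (sm / sb) (divr_ge0 (ltW smp) (ltW sbp)).
rewrite em eB eA.
have -> : 2 * (sm / sb) * (X * sb) + (sm / sb) ^+ 2 * sb ^+ 2 = 2 * sm * X + sm ^+ 2.
  by field; rewrite gt_eqF.
move=> H; nra.
Qed.

Unset Implicit Arguments.
Set Strict Implicit.

Theorem theorem5p5 (R : realType) (n r : nat) (u : 'I_r -> 'I_n -> int)
  (S : {set {set 'I_r}}) (hfan : is_complete_fan R u S) (hproj : projective R u S)
  (x : 'I_r -> R[i]) (hx : Zfan S x) (a : 'I_r -> R) (ha : ample u S a) :
  exists lam : 'I_r -> R,
    (Lambda u a x lam /\ adapted u a x lam) /\
    (forall mu, Lambda u a x mu -> adapted u a x mu -> mu = lam) /\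
    MD u a x = (- normR lam)%:E.
Proof.
pose EG : seq (vecR R r) := [seq (fun i => uR R u i j) | j <- enum 'I_n].
have hEG : forall v, inH EG v <-> GammaR u v.
  move=> v; rewrite inH_map; split => h j.
    have := h j (mem_enum _ j); rewrite /dotR => H; rewrite -[RHS]H.
    by apply: eq_bigr => i _; rewrite mulrC.
  by move=> _; rewrite /dotR -[RHS](h j); apply: eq_bigr => i _; rewrite mulrC.
pose GS := [seq delta R i | i <- enum (S_x x)].
have hsig : forall v, sigma_x u x v <-> inH EG v /\ inG GS v.
  move=> v; rewrite hEG inG_map; split => [[h1 h2]|[h1 h2]]; split => // i.
    by rewrite mem_enum dotR_delta; apply: h2.
  by move=> hi; rewrite -dotR_delta; apply: h2; rewrite mem_enum.
have hWZ : forall Z v, W_ u Z v <-> inH ([seq delta R i | i <- enum Z] ++ EG) v.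
  move=> Z v; rewrite inH_cat inH_map hEG; split => [[h1 h2]|[h1 h2]]; split => //.
    by move=> i; rewrite mem_enum dotR_delta; apply: h2.
  by move=> i hi; rewrite -dotR_delta; apply: h1; rewrite mem_enum.
have hprojspec : forall Z, isproj (W_ u Z) (chistar u a) (proj (W_ u Z) (chistar u a)).
  move=> Z; apply: (epsilon_spec (inhabits (@vzero R r)) (isproj (W_ u Z) (chistar u a))).
  have [p hp] := proj_exists ([seq delta R i | i <- enum Z] ++ EG) (chistar u a).
  exists p; apply: isproj_ext hp => v; split => /hWZ //.
pose c0 := chistar u a.
have [hc0G hc0] : GammaR u c0 /\ forall v, GammaR u v -> dotR c0 v = pairD a v.
  rewrite /c0 /chistar.
  apply: (epsilon_spec (inhabits (@vzero R r)) (fun w => GammaR u w /\ forall v, GammaR u v -> dotR w v = pairD a v)).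
  have [p [hp1 hp2]] := proj_exists EG a.
  exists p; split; first by apply/hEG.
  move=> v hv; have := hp2 v (proj2 (hEG v) hv); rewrite dotR_subl.
  by move/eqP; rewrite subr_eq0 => /eqP e; rewrite /pairD e.
pose cm := fun i => - c0 i.
have [q [m [hq1 [hq2 [hq3 hq4]]]]] := min_exists cm GS EG.
pose Z := [set i in mask m (enum (S_x x))]%SET.
have hZ : forall v, inH (mask m GS ++ EG) v <-> W_ u Z v.
  move=> v; rewrite hWZ !inH_cat -map_mask !inH_map.
  split => [[h1 h2]|[h1 h2]]; split => // i hi.
    by apply: h1; move: hi; rewrite mem_enum inE.
  by apply: h1; rewrite mem_enum inE.
have hqG : GammaR u q by apply/hEG.
have hqS : sigma_x u x q by apply/hsig.
have hcq : dotR c0 q = - dotR q q.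
  have := proj2 hq1 q (proj1 hq1); rewrite dotR_subl /cm dotR_oppl.
  by move/eqP; rewrite subr_eq0 => /eqP <-; rewrite opprK.
pose m2 := dotR q q.
have hbound : forall v, sigma_x u x v -> forall t, 0 <= t ->
    - m2 <= 2 * t * dotR c0 v + t ^+ 2 * dotR v v.
  move=> v /hsig [hv1 hv2] t ht.
  have := hq4 (fun i => t * v i) (inH_scale t hv1) (inG_scale ht hv2).
  rewrite !fd_opp dotR_scale dotR_scale2 hcq /m2 => H; lra.
have [l0 [hl0G [hl0S hl0neg]]] := unstable hfan hx ha.
have hm2 : 0 < m2.
  apply: (real_pos (A := dotR c0 l0) (B := dotR l0 l0)).
  - exact: dotR_ge0.
  - by rewrite hc0.
  - exact: hbound.
have hnq : normR q = Num.sqrt m2 by [].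
have hratio_q : pairD a q / normR q = - normR q.
  rewrite -hc0 // hcq -/m2 hnq -{1}(sqr_sqrtr (ltW hm2)) expr2 mulNr mulfK //.
  by rewrite gt_eqF // sqrtr_gt0.
have hMD : MD u a x = (- normR q)%:E.
  apply/le_anti/andP; split.
    apply: ge_ereal_inf; exists (- normR q)%:E => //.
    exists q; last by rewrite hratio_q.
    split => // hq0.
    by move: hm2; rewrite /m2 hq0 /dotR big1 ?ltxx // => i _; rewrite mulr0.
  rewrite /MD; apply/ereal_infP => y [lam [hl hl0] <-]; rewrite lee_fin.
  have hB : 0 < dotR lam lam.
    rewrite lt_def dotR_ge0 andbT; apply/eqP => /dotR_eq0 h0; apply: hl0.
    by rewrite h0.
  rewrite -hc0; last by case: hl.
  exact: (real_ratio hm2 hB (hbound _ hl)).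
exists q; split; [split|split] => //.
- exists Z; split; last split => //.
    by apply/fintype.subsetP => i; rewrite inE => /mem_mask; rewrite mem_enum.
  have hpq : isproj (W_ u Z) c0 (fun i => - q i).
    split; first by apply/hZ; apply: inH_opp; case: hq1.
    move=> y /hZ hy.
    have -> : (fun i => c0 i - - q i) = (fun i => (-1) * (cm i - q i) + 0 * (cm i - q i)).
      by apply: funext => i; rewrite /cm; ring.
    by rewrite dotR_linl (proj2 hq1 y hy); ring.
  have hpz := hprojspec Z.
  have e := isproj_uniq (isproj_ext (fun v => iff_sym (hZ v)) hpz)
                        (isproj_ext (fun v => iff_sym (hZ v)) hpq).
  by apply: funext => i; rewrite /c0 in e; rewrite e opprK.
- by rewrite /adapted hMD hratio_q.
- move=> mu [Z' [hZ' [hmu hmuS]]] hadm.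
  have [hp1 hp2] := hprojspec Z'.
  set p := proj (W_ u Z') (chistar u a) in hp1 hp2 hmu.
  have ep : p = (fun i => - mu i) by apply: funext => i; rewrite hmu opprK.
  have hmuW : W_ u Z' mu.
    by rewrite hmu; apply/hWZ; apply: inH_opp; apply/hWZ.
  have hcmu : dotR c0 mu = - dotR mu mu.
    have := hp2 mu hmuW; rewrite dotR_subl ep dotR_oppl.
    by move/eqP; rewrite subr_eq0 => /eqP ->.
  have hmuG : GammaR u mu by case: hmuW.
  move: hadm; rewrite /adapted hMD => /eqP; rewrite eqe => /eqP.
  rewrite -hc0 // hcmu hnq /normR => hh.
  pose b := dotR mu mu.
  have hb : 0 < b.
    rewrite lt_def dotR_ge0 andbT; apply/eqP => b0.
    move: hh; rewrite -/b b0 oppr0 mul0r => /eqP; rewrite eq_sym oppr_eq0 sqrtr_eq0.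
    by rewrite leNgt hm2.
  have hbm : b = m2.
    move: hh; rewrite -/b -{1}(sqr_sqrtr (ltW hb)) expr2 mulNr mulfK; last first.
      by rewrite gt_eqF // sqrtr_gt0.
    move/eqP; rewrite eqr_opp => /eqP hs.
    by rewrite -(sqr_sqrtr (ltW hb)) hs sqr_sqrtr // ltW.
  have hfmu : fd cm mu = fd cm q by rewrite !fd_opp hcmu hcq -/b -/m2 hbm.
  have [hmu1 hmu2] := proj1 (hsig mu) hmuS.
  pose w := fun i => 2^-1 * mu i + (1 - 2^-1) * q i.
  have hw := hq4 w (inH_lin _ _ hmu1 hq2) (inG_conv _ _ hmu2 hq3).
  move: hw; rewrite fd_mid hfmu => hw.
  have hD : dotR (fun i => mu i - q i) (fun i => mu i - q i) = 0.
    apply/eqP; rewrite eq_le dotR_ge0 andbT.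
    have := dotR_ge0 (fun i => mu i - q i); lra.
  apply: funext => i; have := congr1 (fun f => f i) (dotR_eq0 hD) => /= /eqP.
  by rewrite subr_eq0 => /eqP.
Qed.
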